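(* Let $\mu_1$ be an LTI probability measure on $\{0,1\}^{\{0,1\}}$ and set $c_0=\mu_1(00)$, $c_1=\mu_1(11)$, $c_2=\mu_1(01)+\mu_1(10)$. If $L\ge2$ is even, $\mu_1$ has an extension to a translation invariant probability measure on $Y_L=\{0,1\}^{\mathbb{Z}_L}$. If $L\ge3$ is odd, $\mu_1$ has such an extension if and only if $c_2\le1-1/L$.
   Context: $\mathbb{Z}_L$ is the cycle of $L$ sites with translations mod $L$; an extension to $Y_L$ is a rotation-invariant probability measure on $Y_L$ whose marginal on sites $0,1$ is $\mu_1$. For $k=1$, LTI means $\mu_1(01)=\mu_1(10)$. *)

(* Defs.v *)
From HB Require Import structures.
From mathcomp Require Import all_boot all_order all_algebra.
Set Implicit Arguments. Unset Strict Implicit. Unset Printing Implicit Defensive.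
Import Order.TTheory GRing.Theory Num.Theory.
Local Open Scope ring_scope.

Definition config (L : nat) := {ffun 'I_L -> bool}.

Definition site_val (L : nat) (x : config L) (k : nat) : bool :=
  [exists i : 'I_L, (val i == k %% L)%N && x i].

Definition shift (L : nat) (x : config L) : config L :=
  [ffun i : 'I_L => site_val x i.+1].

Definition prob2 (R : realFieldType) (mu1 : bool -> bool -> R) : Prop :=
  (forall a b, 0 <= mu1 a b) /\ mu1 false false + mu1 false true + mu1 true false + mu1 true true = 1.

(* LTI for k = 1: mu1(01) = mu1(10). *)
Definition LTI2 (R : realFieldType) (mu1 : bool -> bool -> R) : Prop :=
  mu1 false true = mu1 true false.

Definition is_extension (R : realFieldType) (L : nat) (mu1 : bool -> bool -> R)
    (nu : config L -> R) : Prop :=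
  [/\ forall x, 0 <= nu x,
      \sum_(x : config L) nu x = 1,
      forall x, nu (shift x) = nu x &
      forall a b, \sum_(x : config L | (site_val x 0 == a) && (site_val x 1 == b)) nu x
                  = mu1 a b].

Definition has_extension (R : realFieldType) (L : nat) (mu1 : bool -> bool -> R) : Prop :=
  exists nu : config L -> R, @is_extension R L mu1 nu.

(* Main.v *)
Require Import Defs.
From HB Require Import structures.
From mathcomp Require Import all_boot all_order all_algebra ring lra zify.
From Stdlib Require Import Lia.
Import Order.TTheory GRing.Theory Num.Theory.
Local Open Scope ring_scope.
Set Implicit Arguments. Unset Strict Implicit.

Section Basics.
Variable L : nat.
Hypothesis L0 : (0 < L)%N.

Lemma site_valE (x : config L) k : site_val x k = x (Ordinal (ltn_pmod k L0)).
Proof.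
apply/existsP/idP => [[i /andP [/eqP Hi Hx]]|Hx].
  by have -> : Ordinal (ltn_pmod k L0) = i by apply: val_inj; rewrite /= Hi.
by exists (Ordinal (ltn_pmod k L0)); rewrite /= eqxx Hx.
Qed.

Lemma site_val_mod (x : config L) k : site_val x (k %% L) = site_val x k.
Proof. by rewrite /site_val; under eq_existsb do rewrite modn_mod. Qed.

Lemma site_val_ord (x : config L) (i : 'I_L) : site_val x i = x i.
Proof. rewrite site_valE; congr (x _); apply: val_inj; exact: modn_small. Qed.

Lemma site_valL (x : config L) k : site_val x (k + L) = site_val x k.
Proof. by rewrite -site_val_mod modnDr site_val_mod. Qed.

Lemma config_ext (x y : config L) :
  (forall k, site_val x k = site_val y k) -> x = y.
Proof. by move=> H; apply/ffunP => i; rewrite -!site_val_ord H. Qed.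

Lemma site_val_shift (x : config L) k : site_val (shift x) k = site_val x k.+1.
Proof.
rewrite site_valE /shift ffunE /=.
by rewrite -site_val_mod -addn1 modnDml site_val_mod addn1.
Qed.

Lemma shift_inj : injective (@shift L).
Proof.
move=> x y H; apply: config_ext => k.
rewrite -(site_valL x) -(site_valL y).
have -> : (k + L = (k + L.-1).+1)%N by rewrite -addnS prednK.
by rewrite -!site_val_shift H.
Qed.

Lemma site_val_iter n (x : config L) k : site_val (iter n (@shift L) x) k = site_val x (k + n).
Proof.
elim: n k => [|n IH] k; first by rewrite addn0.
by rewrite iterS site_val_shift IH addSnnS.
Qed.

Definition rot (k : nat) (y : config L) : config L := [ffun i : 'I_L => site_val y (i + k)].

Lemma site_val_rot k y j : site_val (rot k y) j = site_val y (j + k).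
Proof.
by rewrite site_valE /rot ffunE /= -site_val_mod modnDml site_val_mod.
Qed.

Lemma shift_rot k y : shift (rot k y) = rot k.+1 y.
Proof. by apply: config_ext => j; rewrite site_val_shift !site_val_rot addSnnS. Qed.

Lemma rotL y : rot L y = rot 0 y.
Proof. by apply: config_ext => j; rewrite !site_val_rot site_valL addn0. Qed.

Lemma sum_shift_nat (V : zmodType) (F : nat -> V) :
  F L = F 0%N -> \sum_(0 <= k < L) F k.+1 = \sum_(0 <= k < L) F k.
Proof.
move=> H; have := big_nat_recr L 0 F (leq0n _) (op := +%R) (idx := 0).
rewrite big_nat_recl // H => E.
by rewrite -[LHS](addKr (F 0%N)) E addrC addrK.
Qed.

Section Orb.
Variable R : realFieldType.

Lemma sum_ind (T : finType) (P : pred T) (z : T) :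
  \sum_(x | P x) ((z == x)%:R : R) = (P z)%:R.
Proof.
rewrite big_mkcond (bigD1 z) //= eqxx big1 => [|x Hx].
  by case: (P z); rewrite /= ?mulr1 ?addr0.
by rewrite eq_sym (negbTE Hx); case: (P x).
Qed.

Definition orb (y x : config L) : R := L%:R^-1 * \sum_(0 <= k < L) ((rot k y == x)%:R).

Lemma L_neq0 : (L%:R : R) != 0.
Proof. by rewrite pnatr_eq0 -lt0n. Qed.

Lemma orb_ge0 y x : 0 <= orb y x.
Proof. by rewrite mulr_ge0 ?invr_ge0 ?ler0n // sumr_ge0 // => k _; rewrite ler0n. Qed.

Lemma orb_sum y : \sum_x orb y x = 1.
Proof.
rewrite -mulr_sumr exchange_big /=.
under eq_bigr do rewrite (sum_ind xpredT).
by rewrite sumr_const_nat subn0 /= -mulr_natr mul1r mulVf // L_neq0.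
Qed.

Lemma orb_shift y x : orb y (shift x) = orb y x.
Proof.
rewrite /orb; congr (_ * _).
rewrite -(@sum_shift_nat _ (fun k => ((rot k y == shift x)%:R : R))) /=; last by rewrite rotL.
by apply: eq_bigr => k _; rewrite -shift_rot (inj_eq shift_inj).
Qed.

Lemma orb_marg y a b :
  \sum_(x | (site_val x 0 == a) && (site_val x 1 == b)) orb y x =
  L%:R^-1 * \sum_(0 <= k < L) ((site_val y k == a) && (site_val y k.+1 == b))%:R.
Proof.
rewrite -mulr_sumr exchange_big /=; congr (_ * _); apply: eq_bigr => k _.
by rewrite sum_ind !site_val_rot add0n add1n.
Qed.
End Orb.

Section Count.
Variable R : realFieldType.
Definition cfg (f : nat -> bool) : config L := [ffun i : 'I_L => f (val i)].

Lemma site_val_cfg f k : site_val (cfg f) k = f (k %% L)%N.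
Proof. by rewrite site_valE ffunE. Qed.

Lemma sum_odd (F : bool -> R) m :
  \sum_(0 <= k < m.*2) F (odd k) = m%:R * (F false + F true).
Proof.
elim: m => [|m IH]; first by rewrite big_geq // mul0r.
rewrite doubleS !big_nat_recr //= ?leqW ?leq_addr // IH odd_double /=.
by rewrite mulrSr mulrDl mul1r addrA.
Qed.

Lemma marg_const c a b :
  \sum_(x | (site_val x 0 == a) && (site_val x 1 == b)) orb R (cfg (fun _ => c)) x =
  ((c == a) && (c == b))%:R.
Proof.
rewrite orb_marg; under eq_bigr do rewrite !site_val_cfg.
have E : forall x : R, x *+ L = L%:R * x by move=> x; rewrite mulr_natl.
by rewrite sumr_const_nat subn0 (E ((c == a) && (c == b))%:R) mulrA mulVf ?mul1r // L_neq0.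
Qed.

Lemma marg_alt_even c a b m : L = m.*2 ->
  \sum_(x | (site_val x 0 == a) && (site_val x 1 == b)) orb R (cfg (fun k => odd k (+) c)) x =
  2^-1 * (((c == a) && (~~ c == b))%:R + ((~~ c == a) && (c == b))%:R).
Proof.
move=> HL; rewrite orb_marg; under eq_bigr do rewrite !site_val_cfg !odd_mod ?HL ?odd_double //.
rewrite HL.
pose G := fun o => ((o (+) c == a) && (~~ o (+) c == b))%:R : R.
rewrite (eq_bigr (fun k => G (odd k))); last first.
  by move=> k _; rewrite /G /= ?oddS.
rewrite sum_odd /G /=.
have m0 : (m%:R : R) != 0 by rewrite pnatr_eq0 -lt0n; move: L0; rewrite HL double_gt0.
by rewrite -muln2 natrM; field.
Qed.

Lemma marg_alt_odd c a b m : L = m.*2.+1 ->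
  \sum_(x | (site_val x 0 == a) && (site_val x 1 == b)) orb R (cfg (fun k => odd k (+) c)) x =
  L%:R^-1 * (m%:R * (((c == a) && (~~ c == b))%:R + ((~~ c == a) && (c == b))%:R)
             + ((c == a) && (c == b))%:R).
Proof.
move=> HL; rewrite orb_marg; congr (_ * _); rewrite {1}HL big_nat_recr //=.
under eq_big_nat => k /andP [_ Hk] do rewrite !site_val_cfg !modn_small ?HL ?ltnS ?(ltnW Hk) //.
rewrite !site_val_cfg HL modn_small // modnn odd_double /=.
pose G := fun o => ((o (+) c == a) && (~~ o (+) c == b))%:R : R.
rewrite (eq_bigr (fun k => G (odd k))); last first.
  by move=> k _; rewrite /G /= ?oddS.
rewrite sum_odd /G /=.
by congr (_ * (_ + _) + _); case: c.
Qed.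
End Count.
Lemma parity_sum (s : nat -> bool) n :
  odd (\sum_(0 <= k < n) (s k != s k.+1)) = (s 0%N != s n).
Proof.
elim: n => [|n IH]; first by rewrite big_geq // eqxx.
rewrite big_nat_recr //= oddD IH.
by case: (s 0%N); case: (s n); case: (s n.+1).
Qed.

Section Nec.
Variable R : realFieldType.
Variable mu1 : bool -> bool -> R.
Variable nu : config L -> R.
Hypothesis Hext : is_extension mu1 nu.

Lemma E_shift (g : config L -> R) : \sum_x nu x * g (shift x) = \sum_x nu x * g x.
Proof.
case: Hext => _ _ Hinv _.
under eq_bigr => x _ do rewrite -[nu x]Hinv.
by rewrite [RHS](reindex_inj shift_inj).
Qed.

Lemma E_iter n (g : config L -> R) :
  \sum_x nu x * g (iter n (@shift L) x) = \sum_x nu x * g x.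
Proof.
elim: n g => [|n IH] g //.
under eq_bigr do rewrite iterSr.
by rewrite (E_shift (fun x => g (iter n (@shift L) x))) IH.
Qed.

Lemma E_marg (F : bool -> bool -> R) :
  \sum_x nu x * F (site_val x 0) (site_val x 1) = \sum_a \sum_b F a b * mu1 a b.
Proof.
case: Hext => _ _ _ Hm.
transitivity (\sum_a \sum_b \sum_x
   (nu x * F a b * ((site_val x 0 == a) && (site_val x 1 == b))%:R)); last first.
  apply eq_bigr => a _; apply eq_bigr => b _.
  rewrite -Hm mulr_sumr [RHS]big_mkcond; apply eq_bigr => x _.
  by case: ifP => _; rewrite ?mulr1 ?mulr0 // mulrC.
under [RHS]eq_bigr => a _ do rewrite exchange_big /=.
rewrite [RHS]exchange_big /=.
apply eq_bigr => x _; rewrite !big_bool /=.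
by case: (site_val x 0); case: (site_val x 1); rewrite /= ?mulr1 ?mulr0 ?addr0 ?add0r.
Qed.

Lemma E_edge k :
  \sum_x nu x * ((site_val x k != site_val x k.+1)%:R) = mu1 false true + mu1 true false.
Proof.
transitivity (\sum_x nu x * ((site_val (iter k (@shift L) x) 0 != site_val (iter k (@shift L) x) 1)%:R)).
  by apply eq_bigr => x _; rewrite !site_val_iter add0n add1n.
rewrite (E_iter k (fun x => ((site_val x 0 != site_val x 1)%:R))).
rewrite (E_marg (fun a b => (a != b)%:R)) !big_bool /=.
by rewrite !mulr0n !mulr1n !mul0r !mul1r add0r addr0 addrC.
Qed.

Lemma necessity : odd L -> mu1 false true + mu1 true false <= 1 - L%:R^-1.
Proof.
move=> oddL; set c2 := _ + _.
case: Hext => Hpos Hsum _ _.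
have H1 : \sum_x nu x * (\sum_(0 <= k < L) (site_val x k != site_val x k.+1)%:R) = c2 *+ L.
  under eq_bigr do rewrite mulr_sumr.
  rewrite exchange_big /=.
  under eq_bigr do rewrite E_edge.
  by rewrite sumr_const_nat subn0.
have H2 : \sum_x nu x * (\sum_(0 <= k < L) (site_val x k != site_val x k.+1)%:R) <= \sum_x nu x * (L.-1)%:R.
  apply: ler_sum => x _.
  apply: ler_wpM2l; first exact: Hpos.
  rewrite -natr_sum ler_nat.
  have Hp := parity_sum (fun k => site_val x k) L.
  rewrite /= -(site_valL x 0) add0n eqxx in Hp.
  have Hle : (\sum_(0 <= k < L) (site_val x k != site_val x k.+1) <= L)%N.
    apply: (@leq_trans (\sum_(0 <= k < L) 1)%N); last by rewrite sum_nat_const_nat muln1 subn0.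
    by apply: leq_sum => k _; case: (_ != _).
  move: Hle Hp; set D := (\sum_(_ <= _ < _) _)%N => Hle Hp.
  have : D != L by apply/eqP => HD; move: Hp; rewrite HD oddL.
  move: Hle L0; clear; lia.
have H3 : c2 *+ L <= (L.-1)%:R by rewrite -H1; move: H2; rewrite -mulr_suml Hsum mul1r.
have Lpos : (0 : R) < L%:R by rewrite ltr0n.
rewrite -(ler_pM2r Lpos) mulrBl mul1r mulVf ?L_neq0 //.
rewrite mulr_natr; apply: (le_trans H3).
have -> : (L%:R : R) = (L.-1)%:R + 1 by rewrite natr1 prednK.
by rewrite addrK.
Qed.
End Nec.
Section Suff.
Variable R : realFieldType.

Definition margo (y : config L) a b : R :=
  \sum_(x | (site_val x 0 == a) && (site_val x 1 == b)) orb R y x.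

Lemma mix_ext (mu : bool -> bool -> R) y1 y2 y3 y4 (w1 w2 w3 w4 : R) :
  0 <= w1 -> 0 <= w2 -> 0 <= w3 -> 0 <= w4 -> w1 + w2 + w3 + w4 = 1 ->
  (forall a b, w1 * margo y1 a b + w2 * margo y2 a b + w3 * margo y3 a b + w4 * margo y4 a b = mu a b) ->
  has_extension L mu.
Proof.
move=> h1 h2 h3 h4 hs hm.
exists (fun x => w1 * orb R y1 x + w2 * orb R y2 x + w3 * orb R y3 x + w4 * orb R y4 x).
split.
- by move=> x; repeat apply: addr_ge0; apply: mulr_ge0 => //; exact: orb_ge0.
- have S : forall w y, \sum_x w * orb R y x = w by move=> w y; rewrite -mulr_sumr orb_sum mulr1.
  by rewrite !big_split /= !S.
- by move=> x; rewrite !orb_shift.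
- move=> a b; rewrite -hm !big_split /=.
  have S : forall w y, \sum_(x | (site_val x 0 == a) && (site_val x 1 == b)) w * orb R y x = w * margo y a b.
    by move=> w y; rewrite mulr_sumr.
  by rewrite !S.
Qed.
End Suff.
Section Suff2.
Variable R : realFieldType.
Variable mu1 : bool -> bool -> R.
Hypothesis Hprob : prob2 mu1.
Hypothesis Hlti : LTI2 mu1.

Lemma suff_even m : L = m.*2 -> has_extension L mu1.
Proof.
move=> HL; case: Hprob => Hpos Hs; have Hl := Hlti; rewrite /LTI2 in Hl.
apply: (@mix_ext R mu1 (cfg (fun _ => false)) (cfg (fun _ => true))
   (cfg (fun k => odd k (+) false)) (cfg (fun _ => false))
   (mu1 false false) (mu1 true true) (mu1 false true + mu1 true false) 0).
- exact: Hpos.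
- exact: Hpos.
- by apply: addr_ge0; exact: Hpos.
- exact: lexx.
- by rewrite addr0 -Hs; ring.
- move=> a b; rewrite /margo (marg_const _ false) (marg_const _ true) (marg_alt_even _ _ _ _ HL).
  case: a; case: b; rewrite /= ?(mulr1n, mulr0n, mulr1, mulr0, mul0r, addr0, add0r) ?Hl //; field => //.
Qed.

Lemma suff_odd_gen m (T S : R) : L = m.*2.+1 -> 0 <= T -> 0 <= S ->
  T <= mu1 false false -> S <= mu1 true true -> m%:R * (T + S) = mu1 false true ->
  has_extension L mu1.
Proof.
move=> HL hT hS hT0 hS1 hd; case: Hprob => Hpos Hs; have Hl := Hlti; rewrite /LTI2 in Hl.
have Ln := L_neq0 R.
have LE : (L%:R : R) = m%:R + m%:R + 1 by rewrite HL -addnn -addn1 !natrD.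
apply: (@mix_ext R mu1 (cfg (fun _ => false)) (cfg (fun _ => true))
   (cfg (fun k => odd k (+) false)) (cfg (fun k => odd k (+) true))
   (mu1 false false - T) (mu1 true true - S) (L%:R * T) (L%:R * S)).
- by rewrite subr_ge0.
- by rewrite subr_ge0.
- by apply: mulr_ge0; rewrite ?ler0n.
- by apply: mulr_ge0; rewrite ?ler0n.
- rewrite LE; rewrite -Hl -hd in Hs; lra.
- move=> a b; rewrite /margo (marg_const _ false) (marg_const _ true)
    (marg_alt_odd _ _ _ _ HL) (marg_alt_odd _ _ _ _ HL).
  case: a; case: b; rewrite /= ?(mulr1n, mulr0n, mulr1, mulr0, mul0r, addr0, add0r).
  + by field.
  + by rewrite -Hl -hd; field.
  + by rewrite -hd; field.
  + by field.
Qed.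

Lemma suff_odd m : L = m.*2.+1 -> (0 < m)%N ->
  mu1 false true + mu1 true false <= 1 - L%:R^-1 -> has_extension L mu1.
Proof.
move=> HL m0 h; case: Hprob => Hpos Hs; have Hl := Hlti; rewrite /LTI2 in Hl.
rewrite -Hl in h Hs.
have Mpos : (0 : R) < m%:R by rewrite ltr0n.
have Mn : (m%:R : R) != 0 by rewrite gt_eqF.
have Lpos : (0:R) < L%:R by rewrite ltr0n.
have LE : (L%:R : R) = m%:R + m%:R + 1 by rewrite HL -addnn -addn1 !natrD.
have h' : (mu1 false true + mu1 false true) * L%:R <= L%:R - 1.
  by move: h; rewrite -(ler_pM2r Lpos) mulrBl mul1r mulVf // L_neq0.
have K : mu1 false true * (m%:R + m%:R + 1) <= m%:R by rewrite LE in h'; lra.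
have dpos : 0 <= mu1 false true by apply: Hpos.
have c0pos : 0 <= mu1 false false by apply: Hpos.
have c1pos : 0 <= mu1 true true by apply: Hpos.
case: (leP (mu1 false true / m%:R) (mu1 false false)) => hc.
- apply: (@suff_odd_gen m (mu1 false true / m%:R) 0) => //.
  + by rewrite divr_ge0 // ltW.
  + by rewrite addr0 mulrC divfK.
- apply: (@suff_odd_gen m (mu1 false false) (mu1 false true / m%:R - mu1 false false)) => //.
  + by rewrite subr_ge0 ltW.
  + have : mu1 false true / m%:R <= 1 - (mu1 false true + mu1 false true).
      rewrite ler_pdivrMr //; lra.
    lra.
  + by rewrite addrC subrK mulrC divfK.
Qed.
End Suff2.
End Basics.

Theorem mainTheorem5 (R : realFieldType) (mu1 : bool -> bool -> R)
    (Hprob : prob2 mu1) (Hlti : LTI2 mu1) :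
  (forall L : nat, (2 <= L)%N -> ~~ odd L -> @has_extension R L mu1) /\
  (forall L : nat, (3 <= L)%N -> odd L ->
     (@has_extension R L mu1 <->
      mu1 false true + mu1 true false <= 1 - (L%:R)^-1)).
Proof.
split.
- move=> L HL2 Hev.
  have L0 : (0 < L)%N by apply: leq_trans HL2.
  apply: (@suff_even L L0 R mu1 Hprob Hlti (L./2)).
  by rewrite -{1}(odd_double_half L) (negbTE Hev) add0n.
- move=> L HL3 Hodd.
  have L0 : (0 < L)%N by apply: leq_trans HL3.
  have HL : L = (L./2).*2.+1 by rewrite -{1}(odd_double_half L) Hodd.
  split.
  + by move=> [nu Hnu]; apply: (@necessity L L0 R mu1 nu Hnu Hodd).
  + move=> h; apply: (@suff_odd L L0 R mu1 Hprob Hlti (L./2) HL) => //.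
    by move: HL3; rewrite HL; case: (L./2).
Qed.
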